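(* Let $n\ge 5$ and $\Delta,\Delta'\in\mathcal{P}_n$. If there exists $i\in\mathbb{Z}_n$ such that $lab_\Delta((i+1,i))=lab_{\Delta'}((i+1,i))=\oplus$ and $lab_\Delta((i-1,i))\neq lab_{\Delta'}((i-1,i))$, and moreover $lab_\Delta((j,j-1))=lab_{\Delta'}((j,j-1))$ for all $j\in\mathbb{Z}_n$, then $f^{(\Delta)}_{8,n}\neq f^{(\Delta')}_{8,n}$.
   Context: Cells are indexed by $\mathbb{Z}_n=\{0,\dots,n-1\}$, indices modulo $n$. Rule $8$ has local rule $r_8(x_1,x_2,x_3)=\neg x_1\wedge x_2\wedge x_3$ and global function $f_{8,n}(x)_i=r_8(x_{i-1},x_i,x_{i+1})$. An update schedule is an ordered partition $\Delta=(\Delta_1,\dots,\Delta_k)$ of $\mathbb{Z}_n$ into nonempty blocks; $\mathcal{P}_n$ is the set of them. For a block $B$ let $f^{(B)}(x)_i=f_{8,n}(x)_i$ if $i\in B$ and $x_i$ otherwise; $f^{(\Delta)}_{8,n}=f^{(\Delta_k)}\circ\cdots\circ f^{(\Delta_1)}$. (The paper states the conclusion as inequality of the transition digraphs with arcs $(x,f^{(\Delta)}_{8,n}(x))$, equivalent to inequality of the maps.) For $u,v\in\mathbb{Z}_n$ with $u\in\Delta_a$, $v\in\Delta_b$, $lab_\Delta((u,v))=\oplus$ if $b\le a$ and $\ominus$ if $a<b$. *)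

(* Defs.v *)
From mathcomp Require Import all_boot.
Set Implicit Arguments. Unset Strict Implicit. Unset Printing Implicit Defensive.

(* Cells are 'I_n; i+1 is ordS i, i-1 is ord_pred i (cyclic, mod n). *)
Definition config (n : nat) := {ffun 'I_n -> bool}.

Definition r8 (x1 x2 x3 : bool) : bool := ~~ x1 && x2 && x3.

Definition f8 (n : nat) (x : config n) : config n :=
  [ffun i => r8 (x (ord_pred i)) (x i) (x (ordS i))].

Definition update_schedule (n : nat) (D : seq {set 'I_n}) : bool :=
  all (fun B : {set 'I_n} => B != set0) D && [forall i : 'I_n, count (fun B : {set 'I_n} => i \in B) D == 1].

Definition block_update (n : nat) (B : {set 'I_n}) (x : config n) : config n :=
  [ffun i => if i \in B then f8 x i else x i].

(* f^(Delta) = f^(Delta_k) o ... o f^(Delta_1). *)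
Definition f8_sched (n : nat) (D : seq {set 'I_n}) (x : config n) : config n :=
  foldl (fun y B => block_update B y) x D.

(* 0-based index a of the block containing u. *)
Definition block_index (n : nat) (D : seq {set 'I_n}) (u : 'I_n) : nat :=
  find (fun B : {set 'I_n} => u \in B) D.

Inductive label := Oplus | Ominus.

Definition lab (n : nat) (D : seq {set 'I_n}) (u v : 'I_n) : label :=
  if block_index D v <= block_index D u then Oplus else Ominus.

(* Main.v *)
Require Import Defs.
From mathcomp Require Import all_boot.
From mathcomp Require Import zify.
Set Implicit Arguments.

Section Aux.
Variable n : nat.
Implicit Types (D L : seq {set 'I_n}) (x : config n) (c : 'I_n).

Definition FF L x := foldl (fun y B => block_update B y) x L.

Lemma notin_fold L x c : ~~ has (fun B : {set 'I_n} => c \in B) L -> FF L x c = x c.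
Proof.
elim: L x => //= B L IH x /norP [nB nL].
by rewrite /FF /= IH // /block_update ffunE (negbTE nB).
Qed.

Lemma has_take_sub (p : pred {set 'I_n}) j s : has p (take j s) -> has p s.
Proof. by rewrite -{2}(cat_take_drop j s) has_cat => ->. Qed.

Lemma bu_in (B : {set 'I_n}) y c : c \in B -> block_update B y c = f8 y c.
Proof. by move=> h; rewrite /block_update [in LHS]ffunE h. Qed.

Lemma st_formula D x c m :
  count (fun B : {set 'I_n} => c \in B) D = 1 ->
  FF (take m D) x c = if m <= block_index D c then x c
                      else f8 (FF (take (block_index D c) D) x) c.
Proof.
move=> hc.
set P := (fun B : {set 'I_n} => c \in B).
have hasD : has P D by rewrite has_count hc.
have hk : block_index D c < size D by rewrite -has_find.
case: ifP => hm.
  apply: notin_fold; rewrite has_take // -leqNgt //.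
move/negbT: hm; rewrite -ltnNge => hm.
set k := block_index D c.
have [j ->] : exists j, m = k + j.+1 by exists (m - k).-1; lia.
rewrite takeD (drop_nth set0 hk) /FF foldl_cat /=.
have Pk : P (nth set0 D k) by exact: nth_find.
rewrite -/(FF _ _) notin_fold.
  by apply: bu_in.
apply/negP => /has_take_sub hd.
move: hc; rewrite -{1}(cat_take_drop k D) (drop_nth set0 hk) count_cat /=; rewrite /P in Pk; rewrite Pk.
have : has P (take k D) = false by rewrite has_take // ltnn.
rewrite has_count => /negbT; rewrite -leqNgt leqn0 => /eqP ->.
move: hd; rewrite has_count; case: (count P _) => //.
Qed.

Lemma final_formula D x c :
  count (fun B : {set 'I_n} => c \in B) D = 1 ->
  f8_sched D x c = f8 (FF (take (block_index D c) D) x) c.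
Proof.
move=> hc.
have hasD : has (fun B : {set 'I_n} => c \in B) D by rewrite has_count hc.
have hk : block_index D c < size D by rewrite -has_find.
rewrite /f8_sched -(take_size D) -/(FF _ _) st_formula // leqNgt hk.
by rewrite take_size.
Qed.

End Aux.

Section Main.
Variable n : nat.
Implicit Types (D L : seq {set 'I_n}) (x : config n) (c : 'I_n).

Lemma sched_count D c : update_schedule D ->
  count (fun B : {set 'I_n} => c \in B) D = 1.
Proof. by case/andP => _ /forallP h; apply/eqP; exact: h. Qed.

Lemma st_le D x c m : update_schedule D -> m <= block_index D c ->
  FF (take m D) x c = x c.
Proof. by move=> hD hm; rewrite st_formula ?sched_count // hm. Qed.

Lemma st_false D x c m : update_schedule D -> x c = false ->
  FF (take m D) x c = false.
Proof.
move=> hD hx; rewrite st_formula ?sched_count //; case: ifP => // _.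
by rewrite /f8 ffunE /r8 [in X in _ && X && _]st_le // hx andbF.
Qed.

Lemma keyD D x i : update_schedule D ->
  block_index D i <= block_index D (ord_pred i) ->
  x (ord_pred i) = true -> f8_sched D x i = false.
Proof.
move=> hD hb hx.
by rewrite final_formula ?sched_count // /f8 ffunE /r8 st_le // hx.
Qed.

Lemma keyD' D x i : update_schedule D ->
  block_index D (ord_pred i) < block_index D i ->
  block_index D i <= block_index D (ordS i) ->
  x (ord_pred (ord_pred (ord_pred i))) = false ->
  x (ord_pred (ord_pred i)) = true ->
  x (ord_pred i) = true -> x i = true -> x (ordS i) = true ->
  f8_sched D x i = true.
Proof.
move=> hD h1 h2 x3 x2 x1 x0 xS.
set p1 := ord_pred i; set p2 := ord_pred p1; set p3 := ord_pred p2.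
have e1 : ordS p1 = i by rewrite /p1 ord_predK.
have e2 : ordS p2 = p1 by rewrite /p2 ord_predK.
rewrite final_formula ?sched_count // /f8 ffunE /r8.
rewrite (st_le _ _ _ _ hD h2) (st_le _ _ _ _ hD (leqnn _)) x0 xS.
rewrite st_formula ?sched_count // leqNgt h1 /= ffunE /r8 -/p1 -/p2 e1.
rewrite (st_le _ _ _ _ hD (leqnn _)) (st_le _ _ _ _ hD (ltnW h1)) x1 x0.
rewrite st_formula ?sched_count //.
case: ifP => [_|]; first by rewrite x2.
move/negbT; rewrite -ltnNge => h3.
rewrite ffunE /r8 -/p3 e2 (st_false _ _ _ _ hD x3) (st_le _ _ _ _ hD (leqnn _)).
by rewrite (st_le _ _ _ _ hD (ltnW h3)) x2 x1.
Qed.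

Lemma val_iter_ordS k (j : 'I_n) : val (iter k (@ordS n) j) = (j + k) %% n.
Proof.
elim: k => [|k IH] /=; first by rewrite addn0 modn_small.
by rewrite IH -addn1 modnDml addn1 addnS.
Qed.

Lemma iter_ordS_neq k (j : 'I_n) : 0 < k < n -> iter k (@ordS n) j != j.
Proof.
move=> /andP [k0 kn]; apply/negP => /eqP /(congr1 val).
rewrite val_iter_ordS /=.
have jn := ltn_ord j.
case: (ltnP (j + k) n) => h.
  rewrite modn_small //= ; lia.
have -> : j + k = (j + k - n) + n by lia.
rewrite modnDr modn_small; lia.
Qed.

Lemma mainD D D' i : 5 <= n -> update_schedule D -> update_schedule D' ->
  block_index D i <= block_index D (ord_pred i) ->
  block_index D' (ord_pred i) < block_index D' i ->
  block_index D' i <= block_index D' (ordS i) ->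
  f8_sched D <> f8_sched D'.
Proof.
move=> n5 hD hD' b1 b2 b3 E.
set p3 := ord_pred (ord_pred (ord_pred i)).
pose x : config n := [ffun c => c != p3].
have ei : i = iter 3 (@ordS n) p3 by rewrite /= /p3 !ord_predK.
have hx : forall k, 0 < k < n -> x (iter k (@ordS n) p3) = true.
  by move=> k hk; rewrite ffunE iter_ordS_neq.
have := congr1 (fun f : config n -> config n => f x i) E => /=.
rewrite (@keyD D x i hD b1); last first.
  have -> : ord_pred i = iter 2 (@ordS n) p3 by rewrite ei /= ordSK.
  by apply: hx; lia.
rewrite (@keyD' D' x i hD' b2 b3) //.
- by rewrite ffunE eqxx.
- have -> : ord_pred (ord_pred i) = iter 1 (@ordS n) p3 by rewrite ei /= !ordSK.
  by apply: hx; lia.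
- have -> : ord_pred i = iter 2 (@ordS n) p3 by rewrite ei /= ordSK.
  by apply: hx; lia.
- by rewrite ei; apply: hx; lia.
- have -> : ordS i = iter 4 (@ordS n) p3 by rewrite ei.
  by apply: hx; lia.
Qed.

End Main.

Theorem mainTheorem16 (n : nat) (D D' : seq {set 'I_n}) :
  5 <= n ->
  update_schedule D -> update_schedule D' ->
  (exists i : 'I_n,
      [/\ lab D (ordS i) i = Oplus, lab D' (ordS i) i = Oplus
        & lab D (ord_pred i) i <> lab D' (ord_pred i) i]) ->
  (forall j : 'I_n, lab D j (ord_pred j) = lab D' j (ord_pred j)) ->
  f8_sched D <> f8_sched D'.
Proof.
move=> n5 hD hD' [i [h1 h2 h3]] hj.
have := hj i; move: h1 h2 h3; rewrite /lab.
case: ifP => // a1 _; case: ifP => // a2 _.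
case: ifP => a3; case: ifP => a4 // _.
- move/negbT: a4; rewrite -ltnNge => a4.
  case: ifP => a5; case: ifP => a6 // _.
    exact: (@mainD _ D D' i).
  move/negbT: a6; rewrite -ltnNge => a6; lia.
- move/negbT: a3; rewrite -ltnNge => a3.
  case: ifP => a5; case: ifP => a6 // _.
    move=> E; exact: (@mainD _ D' D i n5 hD' hD a4 a3 a1 (esym E)).
  move/negbT: a5; rewrite -ltnNge => a5; lia.
Qed.
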